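(* Let $L$ be a finite lattice and let $\phi:\ \hat 0=x_0<x_1<\dots<x_k=\hat 1$ be a chain of $L$ containing its minimum $\hat 0$ and maximum $\hat 1$. Let $\gamma_1,\gamma_1',\gamma_2,\gamma_2'$ be the four edge-labellings of $L$ associated to $\phi$ (defined in the context). Then, as functions on the set of cover relations of $L$ with values in the integers, $\gamma_2=\gamma_2'\le\gamma_1=\gamma_1'$ (pointwise). Moreover, $\gamma_1'=\gamma_2'$ if and only if $x_i$ is a left modular element of $L$ for every $i\in\{0,\dots,k\}$.
   Context: All lattices are finite. A join-irreducible element $j$ covers exactly one element; a meet-irreducible element $m$ is covered by exactly one element. For a join-irreducible $j$ set $\delta(j):=\min\{i\mid j\le x_i\}$; for a meet-irreducible $m$ set $\beta(m):=\max\{i\in\{1,\dots,k\}\mid m\ge x_{i-1}\}$. For a cover relation $b\lessdot c$ of $L$ define $\gamma_1(b\lessdot c):=\min\{\delta(j)\mid j \text{ join-irreducible},\ j\le c,\ j\not\le b\}$, $\gamma_1'(b\lessdot c):=\max\{i\in\{1,\dots,k\}\mid c\wedge x_{i-1}\le b\}$, $\gamma_2(b\lessdot c):=\max\{\beta(m)\mid m \text{ meet-irreducible},\ m\ge b,\ m\not\ge c\}$, $\gamma_2'(b\lessdot c):=\min\{i\in\{0,\dots,k\}\mid b\vee x_i\ge c\}$. An element $a\in L$ is left modular if for all $b<c$ in $L$ one has $(b\vee a)\wedge c=b\vee(a\wedge c)$. *)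

(* Defs.v *)
From mathcomp Require Import all_boot all_order.
Set Implicit Arguments. Unset Strict Implicit. Unset Printing Implicit Defensive.
Import Order.TTheory.
Local Open Scope order_scope.

Section LatticeDefs.
Context {disp : Order.disp_t} {L : finTBLatticeType disp}.

Definition covers (b c : L) : bool :=
  (b < c) && [forall z : L, ~~ ((b < z) && (z < c))].

Definition join_irr (j : L) : bool := #|[set y : L | covers y j]| == 1%N.
Definition meet_irr (m : L) : bool := #|[set y : L | covers m y]| == 1%N.

Definition left_modular (a : L) : Prop :=
  forall b c : L, b < c -> (b `|` a) `&` c = b `|` (a `&` c).

(* The chain is x 0 < x 1 < ... < x k ; values of x beyond k are irrelevant. *)
Definition is_max_chain (k : nat) (x : nat -> L) : Prop :=
  x 0%N = \bot /\ x k = \top /\ (forall i, (i < k)%N -> x i < x i.+1).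

Variables (k : nat) (x : nat -> L).

(* delta(j) = min { i in 0..k | j <= x_i }  (nonempty since x_k = top) *)
Definition delta (j : L) : nat := \big[minn/k]_(i < k.+1 | j <= x i) (i : nat).
Definition beta (m : L) : nat := \max_(1 <= i < k.+1 | x i.-1 <= m) i.

Definition gamma1 (b c : L) : nat :=
  \big[minn/k]_(j : L | [&& join_irr j, j <= c & ~~ (j <= b)]) delta j.
Definition gamma1' (b c : L) : nat :=
  \max_(1 <= i < k.+1 | c `&` x i.-1 <= b) i.
Definition gamma2 (b c : L) : nat :=
  \max_(m : L | [&& meet_irr m, b <= m & ~~ (c <= m)]) beta m.
Definition gamma2' (b c : L) : nat :=
  \big[minn/k]_(i < k.+1 | c <= b `|` x i) (i : nat).

End LatticeDefs.

(* Main.v *)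
Require Import Defs.
From mathcomp Require Import all_boot all_order.
From mathcomp Require Import zify.
Import Order.TTheory.
Local Open Scope order_scope.

Section Helpers.
Context {disp : Order.disp_t} {L : finTBLatticeType disp}.

Lemma ex_min (P : pred L) z : P z -> exists m, P m /\ forall y, y < m -> ~~ P y.
Proof.
move=> Pz.
case: (arg_minnP (fun y => #|[set w : L | w < y]|) Pz) => m Pm Hm.
exists m; split => // y ltym; apply/negP => Py.
have H2 := Hm y Py.
have H1 : (#|[set w : L | (w < y)%O]| < #|[set w : L | (w < m)%O]|)%N.
  apply: proper_card; apply/properP; split.
    by apply/subsetP => w; rewrite !inE => wy; exact: lt_trans wy ltym.
  by exists y; rewrite !inE ?ltxx.
by have := leq_trans H1 H2; rewrite ltnn.
Qed.

Lemma ex_max (P : pred L) z : P z -> exists m, P m /\ forall y, m < y -> ~~ P y.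
Proof.
move=> Pz.
case: (arg_minnP (fun y => #|[set w : L | y < w]|) Pz) => m Pm Hm.
exists m; split => // y ltym; apply/negP => Py.
have H2 := Hm y Py.
have H1 : (#|[set w : L | (y < w)%O]| < #|[set w : L | (m < w)%O]|)%N.
  apply: proper_card; apply/properP; split.
    by apply/subsetP => w; rewrite !inE => wy; exact: lt_trans ltym wy.
  by exists y; rewrite !inE ?ltxx.
by have := leq_trans H1 H2; rewrite ltnn.
Qed.

Lemma coversP (b c : L) :
  reflect (b < c /\ forall z, b < z -> z < c -> False) (covers b c).
Proof.
rewrite /covers; apply: (iffP andP) => [[bc /forallP H]|[bc H]]; split => //.
- by move=> z bz zc; have := H z; rewrite bz zc.
- by apply/forallP => z; apply/negP => /andP[bz zc]; exact: H z bz zc.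
Qed.

Lemma ex_cover (d e : L) : d < e -> exists f, covers d f /\ f <= e.
Proof.
move=> de.
have Pe : (d < e) && (e <= e) by rewrite de lexx.
have [f [/andP[df fe] Hf]] := @ex_min (fun z => (d < z) && (z <= e)) e Pe.
exists f; split => //; apply/coversP; split => // z dz zf.
by move: (Hf z zf); rewrite /= dz (le_trans (ltW zf) fe).
Qed.

Lemma ex_lower (z : L) : \bot < z -> exists y, covers y z.
Proof.
move=> bz.
have [y [yz Hy]] := @ex_max (fun y => y < z) \bot bz.
exists y; apply/coversP; split => // w yw wz.
by move: (Hy w yw); rewrite /= wz.
Qed.

Lemma ex_upper (z : L) : z < \top -> exists y, covers z y.
Proof.
move=> zt.
have [y [yz Hy]] := @ex_min (fun y => z < y) \top zt.
exists y; apply/coversP; split => // w yw wz.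
by move: (Hy w wz); rewrite /= yw.
Qed.

Lemma ex_join_irr (a b : L) : ~~ (a <= b) ->
  exists j, [&& join_irr j, j <= a & ~~ (j <= b)].
Proof.
move=> nab.
have Pa : (a <= a) && ~~ (a <= b) by rewrite lexx nab.
have [j [/andP[ja jb] Hj]] := @ex_min (fun z => (z <= a) && ~~ (z <= b)) a Pa.
have Hlt : forall y, y < j -> y <= b.
  by move=> y yj; move: (Hj y yj); rewrite /= (le_trans (ltW yj) ja) /= negbK.
have jbot : \bot < j.
  by rewrite lt0x; apply: contra jb => /eqP ->; rewrite le0x.
have [y0 cy0] := ex_lower j jbot.
exists j; apply/and3P; split => //; rewrite /join_irr.
apply/cards1P; exists y0; apply/setP => y; rewrite !inE.
apply/idP/eqP => [cy|->//].
move/coversP: cy => [yj Hy]; move/coversP: (cy0) => [y0j Hy0].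
case: (boolP (y <= y0)) => yy0.
  case: (eqVneq y y0) => // ne; exfalso; apply: (Hy y0) => //.
  by rewrite lt_neqAle ne yy0.
have lt1 : y0 < y `|` y0.
  by rewrite lt_neqAle leUr andbT; apply: contra yy0 => /eqP ->; exact: leUl.
have yj' : y `|` y0 <= j by rewrite leUx (ltW yj) (ltW y0j).
case: (eqVneq (y `|` y0) j) => [e|ne].
  by move: jb; rewrite -e leUx (Hlt y yj) (Hlt y0 y0j).
by exfalso; apply: (Hy0 (y `|` y0)) => //; rewrite lt_neqAle ne yj'.
Qed.

Lemma ex_meet_irr (a c : L) : ~~ (c <= a) ->
  exists m, [&& meet_irr m, a <= m & ~~ (c <= m)].
Proof.
move=> nca.
have Pa : (a <= a) && ~~ (c <= a) by rewrite lexx nca.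
have [m [/andP[am cm] Hm]] := @ex_max (fun z => (a <= z) && ~~ (c <= z)) a Pa.
have Hgt : forall y, m < y -> c <= y.
  by move=> y my; move: (Hm y my); rewrite /= (le_trans am (ltW my)) /= negbK.
have mtop : m < \top.
  by rewrite lt_neqAle lex1 andbT; apply: contra cm => /eqP ->; rewrite lex1.
have [y0 cy0] := ex_upper m mtop.
exists m; apply/and3P; split => //; rewrite /meet_irr.
apply/cards1P; exists y0; apply/setP => y; rewrite !inE.
apply/idP/eqP => [cy|->//].
move/coversP: cy => [my Hy]; move/coversP: (cy0) => [my0 Hy0].
case: (boolP (y0 <= y)) => yy0.
  case: (eqVneq y y0) => // ne; exfalso; apply: (Hy y0) => //.
  by rewrite lt_neqAle eq_sym ne yy0.
have lt1 : y `&` y0 < y0.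
  by rewrite lt_neqAle leIr andbT; apply: contra yy0 => /eqP <-; exact: leIl.
have yj' : m <= y `&` y0 by rewrite lexI (ltW my) (ltW my0).
case: (eqVneq m (y `&` y0)) => [e|ne].
  by move: cm; rewrite e lexI (Hgt y my) (Hgt y0 my0).
by exfalso; apply: (Hy0 (y `&` y0)) => //; rewrite lt_neqAle ne yj'.
Qed.

Lemma bigmin_ub (I : eqType) (r : seq I) (P : pred I) (F : I -> nat) k i :
  i \in r -> P i -> (\big[minn/k]_(j <- r | P j) F j <= F i)%N.
Proof.
elim: r => // h t IH; rewrite inE big_cons => /predU1P [<-|it] Pi.
  by rewrite Pi; exact: geq_minl.
by case: ifP => _; [rewrite geq_min IH ?orbT | exact: IH].
Qed.

Lemma minord_ub k (P : pred nat) i : (i < k.+1)%N -> P i ->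
  (\big[minn/k]_(j < k.+1 | P j) (j : nat) <= i)%N.
Proof.
move=> ik Pi.
exact: (@bigmin_ub _ _ (fun j : 'I_k.+1 => P j) (fun j => nat_of_ord j) k (Ordinal ik) (mem_index_enum _) Pi).
Qed.

Lemma minord_att k (P : pred nat) : P k ->
  P (\big[minn/k]_(j < k.+1 | P j) (j : nat)).
Proof.
move=> Pk; elim/big_ind: _ => // a b Pa Pb; rewrite /minn; by case: ifP.
Qed.

Lemma minL_ub (F : L -> nat) (P : pred L) k j : P j ->
  (\big[minn/k]_(i | P i) F i <= F j)%N.
Proof. by move=> Pj; apply: bigmin_ub => //; exact: mem_index_enum. Qed.

Lemma minL_lb (F : L -> nat) (P : pred L) k n : (n <= k)%N ->
  (forall j, P j -> n <= F j)%N -> (n <= \big[minn/k]_(i | P i) F i)%N.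
Proof.
move=> nk H; elim/big_ind: _ => // a b na nb; by rewrite leq_min na nb.
Qed.

Lemma maxseq_att k (Q : pred nat) : Q 0%N ->
  Q (\max_(1 <= i < k.+1 | Q i) i).
Proof.
move=> Q0; elim/big_ind: _ => // a b Pa Pb; rewrite /maxn; by case: ifP.
Qed.

Lemma maxseq_lb k (Q : pred nat) i : (1 <= i)%N -> (i <= k)%N -> Q i ->
  (i <= \max_(1 <= i < k.+1 | Q i) i)%N.
Proof.
move=> i1 ik Qi; apply: (leq_bigmax_seq i) => //.
by rewrite mem_index_iota i1 ltnS.
Qed.

Lemma maxseq_ub k (Q : pred nat) : (\max_(1 <= i < k.+1 | Q i) i <= k)%N.
Proof.
apply/bigmax_leqP_seq => i; rewrite mem_index_iota => /andP[_]; by rewrite ltnS.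
Qed.

End Helpers.

Section Chain.
Context {disp : Order.disp_t} {L : finTBLatticeType disp}.
Variables (k : nat) (x : nat -> L).
Hypothesis Hc : is_max_chain k x.

Lemma x0 : x 0%N = \bot. Proof. by case: Hc. Qed.
Lemma xk : x k = \top. Proof. by case: Hc => _ []. Qed.

Lemma chain_mono i j : (i <= j)%N -> (j <= k)%N -> x i <= x j.
Proof.
case: Hc => _ [_ Hx].
elim: j => [|j IH] ij jk.
  by rewrite leqn0 in ij; move/eqP: ij => ->.
rewrite leq_eqVlt in ij; case/orP: ij => [/eqP -> //| ij].
rewrite ltnS in ij.
exact: le_trans (IH ij (ltnW jk)) (ltW (Hx j jk)).
Qed.

Lemma g1'_spec (b c : L) : b <= c -> ~~ (c <= b) ->
  (1 <= gamma1' k x b c <= k)%N /\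
  forall i, (i <= k)%N -> (c `&` x i <= b) = (i < gamma1' k x b c)%N.
Proof.
move=> bc ncb.
set g := gamma1' k x b c.
have Hatt : c `&` x g.-1 <= b.
  rewrite /g /gamma1'.
  apply: (@maxseq_att k (fun i => c `&` x i.-1 <= b)).
  by rewrite /= x0 meetx0 le0x.
have k1 : (0 < k)%N.
  case: (posnP k) => // k0; exfalso; move: ncb.
  by rewrite (le_trans (lex1 c)) // -xk k0 x0 le0x.
have gk : (g <= k)%N by exact: maxseq_ub.
have g1 : (1 <= g)%N.
  apply: (@maxseq_lb k (fun i => c `&` x i.-1 <= b)) => //.
  by rewrite /= x0 meetx0 le0x.
split; first by rewrite g1 gk.
move=> i ik; apply/idP/idP.
- move=> H.
  have ilt : (i < k)%N.
    rewrite ltn_neqAle ik andbT; apply/eqP => ek; move: H ncb.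
    by rewrite ek xk meetx1 => ->.
  exact: (@maxseq_lb k (fun i => c `&` x i.-1 <= b) i.+1).
- move=> ig; apply: le_trans Hatt; apply: leI2 => //.
  apply: chain_mono; lia.
Qed.

Lemma g2'_spec (b c : L) :
  (gamma2' k x b c <= k)%N /\
  forall i, (i <= k)%N -> (c <= b `|` x i) = (gamma2' k x b c <= i)%N.
Proof.
set g := gamma2' k x b c.
have Hatt : c <= b `|` x g.
  rewrite /g /gamma2'.
  apply: (@minord_att k (fun i => c <= b `|` x i)).
  by rewrite /= xk joinx1 lex1.
have gk : (g <= k)%N.
  apply: (@minord_ub k (fun i => c <= b `|` x i)) => //.
  by rewrite /= xk joinx1 lex1.
split => // i ik; apply/idP/idP.
- by move=> H; apply: (@minord_ub k (fun i => c <= b `|` x i)).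
- move=> gi; apply: le_trans Hatt _; apply: leU2 => //.
  exact: chain_mono.
Qed.

Lemma delta_spec (j : L) : j <= x (delta k x j) /\ (delta k x j <= k)%N.
Proof.
split.
  apply: (@minord_att k (fun i => j <= x i)); by rewrite /= xk lex1.
apply: (@minord_ub k (fun i => j <= x i)) => //; by rewrite /= xk lex1.
Qed.

Lemma beta_spec (m : L) : x (beta k x m).-1 <= m /\ (beta k x m <= k)%N.
Proof.
split; last exact: maxseq_ub.
apply: (@maxseq_att k (fun i => x i.-1 <= m)); by rewrite /= x0 le0x.
Qed.

Lemma key (b c : L) : covers b c ->
  gamma1 k x b c = gamma1' k x b c /\ gamma2 k x b c = gamma2' k x b c /\
  (gamma2' k x b c <= gamma1' k x b c)%N.
Proof.
move=> /coversP [bc Hbc]; have bc' := ltW bc.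
have ncb : ~~ (c <= b) by rewrite (lt_geF bc).
have [/andP[g1 gk] G1] := g1'_spec b c bc' ncb.
have [g2k G2] := g2'_spec b c.
move: g1 gk G1 g2k G2.
set i1 := gamma1' k x b c; set i2 := gamma2' k x b c.
move=> g1 gk G1 g2k G2.
have ni1 : ~~ (c `&` x i1 <= b) by rewrite G1 // ltnn.
split; [|split].
- apply/eqP; rewrite eqn_leq; apply/andP; split.
  + have [j /and3P[jj jle jb]] := ex_join_irr _ _ ni1.
    apply: leq_trans (@minL_ub _ _ (delta k x)
       (fun j => [&& join_irr j, j <= c & ~~ (j <= b)]) k j _) _.
      by rewrite /= jj jb (le_trans jle (leIl _ _)).
    apply: (@minord_ub k (fun i => j <= x i)); first by rewrite ltnS.
    by rewrite /= (le_trans jle (leIr _ _)).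
  + apply: minL_lb => // j /and3P[jj jc jb].
    have [dj dk] := delta_spec j.
    rewrite leqNgt; apply/negP => lt; rewrite -G1 // in lt.
    by move: jb; rewrite (le_trans _ lt) // lexI jc dj.
- apply/eqP; rewrite eqn_leq; apply/andP; split.
  + apply/bigmax_leqP => m /and3P[mm bm cm].
    have [bx bk] := beta_spec m.
    rewrite leqNgt; apply/negP => lt.
    have : c <= b `|` x i2 by rewrite G2.
    move=> H; move: cm; rewrite (le_trans H) //.
    rewrite leUx bm /=; apply: le_trans bx; apply: chain_mono; lia.
  + have i20 : (0 < i2)%N.
      rewrite lt0n; apply/negP => /eqP e0.
      have := G2 0%N (leq0n _); rewrite e0 leqnn x0 joinx0 => cb.
      by move: ncb; rewrite cb.
    have : ~~ (c <= b `|` x i2.-1) by rewrite G2 ?(leq_trans (leq_pred _) g2k) // -ltnNge; lia.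
    move=> /ex_meet_irr [m /and3P[mm bm cm]].
    apply: leq_trans (leq_bigmax_cond m _); last by rewrite mm cm (le_trans (leUl _ _) bm).
    apply: (@maxseq_lb k (fun i => x i.-1 <= m)) => //.
    by rewrite /= (le_trans (leUr _ _) bm).
- rewrite -G2 //.
  have lt1 : b < b `|` (c `&` x i1).
    by rewrite lt_neqAle leUl andbT; apply: contra ni1 => /eqP ->; exact: leUr.
  have le1 : b `|` (c `&` x i1) <= c by rewrite leUx bc' leIl.
  case: (eqVneq (b `|` (c `&` x i1)) c) => [<-|ne].
    by apply: leU2 => //; exact: leIr.
  by exfalso; apply: (Hbc _ lt1); rewrite lt_neqAle ne le1.
Qed.

End Chain.

Theorem theorem3p3 (disp : Order.disp_t) (L : finTBLatticeType disp)
    (k : nat) (x : nat -> L) :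
  is_max_chain k x ->
  (forall b c : L, covers b c ->
     gamma2 k x b c = gamma2' k x b c /\
     (gamma2' k x b c <= gamma1 k x b c)%N /\
     gamma1 k x b c = gamma1' k x b c) /\
  ((forall b c : L, covers b c -> gamma1' k x b c = gamma2' k x b c) <->
   (forall i, (i <= k)%N -> left_modular (x i))).
Proof.
move=> Hc; split.
  move=> b c cov; have [e1 [e2 le]] := @key _ _ k x Hc b c cov.
  by rewrite e1 e2.
split.
- move=> H i ik b c bc.
  set d := b `|` (x i `&` c); set e := (b `|` x i) `&` c.
  have dle : d <= e.
    by rewrite lexI (leU2 (lexx b) (leIl _ _)) leUx (ltW bc) leIr.
  apply/eqP; rewrite eq_le dle andbT.
  case: (boolP (e <= d)) => // ned.
  have de : d < e.
    by rewrite lt_neqAle dle andbT; apply: contra ned => /eqP ->.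
  have [f [cf fe]] := ex_cover _ _ de.
  have [df _] := coversP _ _ cf.
  have ndf : ~~ (f <= d) by rewrite (lt_geF df).
  have [_ G1] := @g1'_spec _ _ k x Hc d f (ltW df) ndf.
  have [_ G2] := @g2'_spec _ _ k x Hc d f.
  have fdx : f <= d `|` x i.
    apply: le_trans fe _; apply: le_trans (leIl _ _) _.
    by apply: leU2 => //; exact: leUl.
  rewrite G2 // -(H d f cf) in fdx.
  have := G1 i ik; rewrite ltnNge fdx /= => E; rewrite -E.
  have h : x i `&` c <= d by exact: leUr.
  apply: (le_trans _ h).
  rewrite meetC; apply: leI2 => //.
  exact: le_trans fe (leIr _ _).
- move=> LM b c cov; have [_ [_ le]] := @key _ _ k x Hc b c cov.
  apply/eqP; rewrite eqn_leq le andbT.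
  move/coversP: (cov) => [bc _].
  have ncb : ~~ (c <= b) by rewrite (lt_geF bc).
  have [_ G1] := @g1'_spec _ _ k x Hc b c (ltW bc) ncb.
  have [g2k G2] := @g2'_spec _ _ k x Hc b c.
  rewrite leqNgt; apply/negP => lt.
  have h1 := G1 _ g2k; rewrite lt in h1.
  have h2 := G2 _ g2k; rewrite leqnn in h2.
  have := LM _ g2k b c bc.
  rewrite meet_r // meetC join_l // => ec.
  by move: bc; rewrite ec ltxx.
Qed.
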